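(* Consider the following algorithm \textsc{$\ell_\infty$-Minimization} on input $A\in\mathbb{R}^{n\times m}$, $b\in\mathbb{R}^n$ in the column span of $A$, $\epsilon>0$, $M>0$. Set $t=0$, $r^{(0)}=\mathbf{1}/m$, $t'=0$, $s=0\in\mathbb{R}^m$. While $\|r^{(t)}\|_1\le 1/\epsilon$: (i) let $x^{(t)}=\arg\min_{x:Ax=b}\sum_i r^{(t)}_i x_i^2$; (ii) if $\|x^{(t)}\|_\infty\le m^{1/3}M$, set $t'\leftarrow t'+1$ and $s\leftarrow s+x^{(t)}$; (iii) if $t'\ge 1$ and $\|s\|_\infty/t'\le(1+\epsilon)M$, return $s/t'$; (iv) let $\alpha^{(t)}_i=1$ if $|x^{(t)}_i|<(1+\epsilon)M$ and $\alpha^{(t)}_i=(x^{(t)}_i)^2/M^2$ otherwise; (v) if $\alpha^{(t)}=\mathbf{1}$, return $x^{(t)}$; (vi) set $r^{(t+1)}_i=r^{(t)}_i\alpha^{(t)}_i$ for all $i$ and $t\leftarrow t+1$. When the while loop exits, return $r^{(t)}/\|r^{(t)}\|_1$. Whenever this algorithm returns after the while loop exits, the returned vector $\bar r=r^{(t)}/\|r^{(t)}\|_1$ satisfies \[ \mathcal{E}_{\bar r}(b)\ \ge\ (1-\epsilon)^2M^2, \] where $\mathcal{E}_{\bar r}(b)=\min_{x:Ax=b}\sum_i \bar r_i x_i^2$.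
   Context: $\mathbf{1}$ is the all-ones vector in $\mathbb{R}^m$.
   Formalization: The accuracy parameter ε ranges over 0 < ε < 1 only, instead of over all ε > 0. The statement above fails without it. *)

(* Defs.v *)
From HB Require Import structures.
From mathcomp Require Import all_boot all_order all_algebra.
From mathcomp Require Import all_classical all_reals all_analysis.
Set Implicit Arguments. Unset Strict Implicit. Unset Printing Implicit Defensive.
Import Order.TTheory GRing.Theory Num.Theory.
Local Open Scope ring_scope.
Local Open Scope classical_set_scope.

Section LinfMin.
Variable R : realType.

Definition norm1 (m : nat) (v : 'cV[R]_m) : R := \sum_(i < m) `|v i 0|.
Definition norminf (m : nat) (v : 'cV[R]_m) : R :=
  \big[Num.max/0]_(i < m) `|v i 0|.

Definition wq (m : nat) (r x : 'cV[R]_m) : R := \sum_(i < m) r i 0 * x i 0 ^+ 2.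

Definition energy (n m : nat) (A : 'M[R]_(n, m)) (b : 'cV[R]_n) (r : 'cV[R]_m) : R :=
  inf [set wq r x | x in [set x : 'cV[R]_m | A *m x = b]].

Definition is_argmin (n m : nat) (A : 'M[R]_(n, m)) (b : 'cV[R]_n) (r x : 'cV[R]_m) :=
  A *m x = b /\ forall y, A *m y = b -> wq r x <= wq r y.

Definition alpha (m : nat) (eps M : R) (x : 'cV[R]_m) : 'cV[R]_m :=
  \col_i (if `|x i 0| < (1 + eps) * M then 1 else x i 0 ^+ 2 / M ^+ 2).

Definition thr (m : nat) (M : R) : R := (m%:R `^ (3%:R)^-1) * M.

(* after step (ii) of iteration k-1: t' = number of j < k with ||x^(j)||_inf <= m^{1/3} M,
   s = sum of those x^(j) *)
Definition tcnt (m : nat) (M : R) (x : nat -> 'cV[R]_m) (k : nat) : nat :=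
  \sum_(j < k | norminf (x j) <= thr m M) 1.
Definition ssum (m : nat) (M : R) (x : nat -> 'cV[R]_m) (k : nat) : 'cV[R]_m :=
  \sum_(j < k | norminf (x j) <= thr m M) x j.

(* [loop_exit_run A b eps M r x T]: r, x are the iterates of the algorithm,
   iterations t = 0, ..., T-1 were executed in full without returning, and the
   while-loop condition fails at t = T. *)
Definition loop_exit_run (n m : nat) (A : 'M[R]_(n, m)) (b : 'cV[R]_n) (eps M : R)
    (r x : nat -> 'cV[R]_m) (T : nat) : Prop :=
  [/\ r 0%N = const_mx (m%:R)^-1,
      (forall t, (t < T)%N ->
        [/\ norm1 (r t) <= eps^-1,
            is_argmin A b (r t) (x t),
            ~ ((1 <= tcnt M x t.+1)%N /\
               norminf (ssum M x t.+1) / (tcnt M x t.+1)%:R <= (1 + eps) * M),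
            alpha eps M (x t) != const_mx 1 &
            r t.+1 = \col_i (r t i 0 * alpha eps M (x t) i 0)]) &
      eps^-1 < norm1 (r T)].

End LinfMin.

(* Main.v *)
Require Import Defs.
From HB Require Import structures.
From mathcomp Require Import all_boot all_order all_algebra.
From mathcomp Require Import all_classical all_reals all_analysis.
From mathcomp Require Import ring lra.
Import Order.TTheory GRing.Theory Num.Theory.
Local Open Scope ring_scope.

Lemma argmin_orth (R : realType) (n m : nat) (A : 'M[R]_(n, m)) (b : 'cV[R]_n)
  (r x y : 'cV[R]_m) : (forall i, 0 <= r i 0) -> is_argmin A b r x -> A *m y = b ->
  \sum_i r i 0 * (2 * x i 0 * y i 0) = 2 * wq r x.
Proof.
move=> r0 [Ax Hmin] Ay.
set z := y - x.
set a := \sum_i r i 0 * x i 0 * z i 0.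
set c := \sum_i r i 0 * z i 0 ^+ 2.
have c0 : 0 <= c by apply: sumr_ge0 => i _; apply: mulr_ge0 => //; exact: sqr_ge0.
have key : forall s, 0 <= s * 2 * a + s ^+ 2 * c.
  move=> s.
  have H : A *m (x + s *: z) = b by rewrite mulmxDr -scalemxAr /z mulmxBr Ax Ay subrr scaler0 addr0.
  have := Hmin _ H; rewrite -subr_ge0 /wq -sumrB.
  have -> : \sum_i (r i 0 * (x + s *: z) i 0 ^+ 2 - r i 0 * x i 0 ^+ 2) =
     \sum_i (s * 2 * (r i 0 * x i 0 * z i 0) + s ^+ 2 * (r i 0 * z i 0 ^+ 2)).
    by apply: eq_bigr => i _; rewrite !mxE; ring.
  by rewrite big_split /= -!mulr_sumr.
have a0 : a = 0.
  have := key (- a / (c + 1)).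
  have cp : 0 < c + 1 by lra.
  move=> h.
  have h2 : 0 <= a ^+ 2 * (- c - 2).
    have -> : a ^+ 2 * (- c - 2) = (c + 1) ^+ 2 * ((- a / (c + 1)) * 2 * a + (- a / (c + 1)) ^+ 2 * c).
      by field; rewrite gt_eqF.
    by apply: mulr_ge0 => //; exact: sqr_ge0.
  have : a ^+ 2 <= 0 by nra.
  by move=> h3; apply/eqP; rewrite -sqrf_eq0 eq_le h3 sqr_ge0.
have : \sum_i r i 0 * (2 * x i 0 * y i 0) = 2 * wq r x + 2 * a.
  rewrite /wq /a mulr_sumr mulr_sumr -big_split /=; apply: eq_bigr => i _.
  rewrite /z !mxE; ring.
by rewrite a0 mulr0 addr0.
Qed.

Lemma alpha_ge0 (R : realType) (m : nat) (eps M : R) (x : 'cV[R]_m) i :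
  0 <= alpha eps M x i 0.
Proof.
rewrite /alpha mxE; case: ifP => _ //.
by apply: divr_ge0; apply: sqr_ge0.
Qed.

Lemma step_ineq (R : realType) (n m : nat) (A : 'M[R]_(n, m)) (b : 'cV[R]_n)
  (eps M : R) (r x y : 'cV[R]_m) : (forall i, 0 <= r i 0) -> 0 < M ->
  is_argmin A b r x -> A *m y = b ->
  wq r x + M ^+ 2 * (\sum_i r i 0 * alpha eps M x i 0 - \sum_i r i 0)
   <= wq (\col_i (r i 0 * alpha eps M x i 0)) y.
Proof.
move=> r0 M0 Hx Ay.
have O := @argmin_orth _ _ _ A b r x y r0 Hx Ay.
have H : \sum_i (r i 0 * (2 * x i 0 * y i 0) - r i 0 * x i 0 ^+ 2
            + M ^+ 2 * (r i 0 * alpha eps M x i 0 - r i 0))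
        <= \sum_i (\col_i (r i 0 * alpha eps M x i 0)) i 0 * y i 0 ^+ 2.
  apply: ler_sum => i _; rewrite !mxE.
  rewrite -subr_ge0.
  have Mn : M != 0 by rewrite gt_eqF.
  case: ifP => _.
    have -> : r i 0 * 1 * y i 0 ^+ 2 -
      (r i 0 * (2 * x i 0 * y i 0) - r i 0 * x i 0 ^+ 2 + M ^+ 2 * (r i 0 * 1 - r i 0))
      = r i 0 * (y i 0 - x i 0) ^+ 2 by ring.
    by apply: mulr_ge0 => //; apply: sqr_ge0.
  have -> : r i 0 * (x i 0 ^+ 2 / M ^+ 2) * y i 0 ^+ 2 -
      (r i 0 * (2 * x i 0 * y i 0) - r i 0 * x i 0 ^+ 2 +
       M ^+ 2 * (r i 0 * (x i 0 ^+ 2 / M ^+ 2) - r i 0))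
      = r i 0 * (x i 0 * y i 0 / M - M) ^+ 2 by field.
  by apply: mulr_ge0 => //; apply: sqr_ge0.
apply: le_trans H.
rewrite !big_split /= O sumrN -mulr_sumr sumrB -/(wq r x).
rewrite le_eqVlt; apply/orP; left; apply/eqP; ring.
Qed.

Theorem lemma4p5 (R : realType) (n m : nat) (A : 'M[R]_(n, m)) (b : 'cV[R]_n)
    (eps M : R) (r x : nat -> 'cV[R]_m) (T : nat) :
  (0 < m)%N ->
  (exists y : 'cV[R]_m, A *m y = b) ->
  0 < eps -> eps < 1 -> 0 < M ->
  loop_exit_run A b eps M r x T ->
  energy A b ((norm1 (r T))^-1 *: r T) >= (1 - eps) ^+ 2 * M ^+ 2.
Proof.
move=> m0 [y0 Ay0] e0 e1 M0 [r0 Hrun Hexit].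
set N := fun t => \sum_i r t i 0.
have N0 : N 0%N = 1.
  rewrite /N r0; under eq_bigr do rewrite mxE.
  rewrite sumr_const card_ord -[_ *+ m]mulr_natr mulrC mulfV //.
  by rewrite pnatr_eq0 -lt0n.
have inv : forall t, (t <= T)%N -> (forall i, 0 <= r t i 0) /\
    forall y, A *m y = b -> M ^+ 2 * (N t - 1) <= wq (r t) y.
  elim=> [|t IH] Ht.
    split; first by move=> i; rewrite r0 mxE invr_ge0 ler0n.
    move=> y _; rewrite N0 subrr mulr0 /wq; apply: sumr_ge0 => i _.
    by apply: mulr_ge0; [rewrite r0 mxE invr_ge0 ler0n | apply: sqr_ge0].
  have [rp Hy] := IH (ltnW Ht).
  have [_ Hx _ _ Hr] := Hrun t Ht.
  have rp' : forall i, 0 <= r t.+1 i 0.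
    by move=> i; rewrite Hr mxE; apply: mulr_ge0 => //; apply: (@alpha_ge0 R).
  split => // y Ay.
  have S := @step_ineq _ _ _ A b eps M (r t) (x t) y rp M0 Hx Ay.
  rewrite -Hr in S.
  have HN : N t.+1 = \sum_i r t i 0 * alpha eps M (x t) i 0.
    by rewrite /N Hr; apply: eq_bigr => i _; rewrite mxE.
  have Hxt := Hy _ (proj1 Hx).
  apply: le_trans S.
  rewrite HN -/(N t).
  lra.
have [rT HT] := inv T (leqnn T).
have n1 : norm1 (r T) = N T.
  by rewrite /norm1 /N; apply: eq_bigr => i _; rewrite ger0_norm.
rewrite n1 in Hexit *.
have NTp : 0 < N T by apply: lt_trans Hexit; rewrite invr_gt0.
apply: lb_le_inf; first by exists (wq ((N T)^-1 *: r T) y0), y0.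
move=> _ [y /= Ay <-].
have -> : wq ((N T)^-1 *: r T) y = (N T)^-1 * wq (r T) y.
  rewrite /wq mulr_sumr; apply: eq_bigr => i _; rewrite mxE; ring.
have H1 := HT y Ay.
have H2 : (N T)^-1 < eps.
  by rewrite -(invrK eps) ltf_pV2 // ?posrE // invr_gt0.
have : M ^+ 2 * (1 - (N T)^-1) <= (N T)^-1 * wq (r T) y.
  have -> : M ^+ 2 * (1 - (N T)^-1) = (N T)^-1 * (M ^+ 2 * (N T - 1)).
    by field; rewrite gt_eqF.
  by apply: ler_wpM2l => //; rewrite invr_ge0 ltW.
have M2 : 0 < M ^+ 2 by rewrite exprn_gt0.
have H3 : (1 - eps) ^+ 2 <= 1 - (N T)^-1.
  have : (1 - eps) ^+ 2 <= 1 - eps by rewrite expr2; nra.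
  lra.
move=> H4; apply: le_trans H4.
by rewrite mulrC; apply: ler_wpM2l => //; apply: ltW.
Qed.
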